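(* Let $\mathfrak{h}$ be a finite-dimensional Hilbert space and let $\mathcal{L}_t=\sum_{m\in\mathbb{Z}}\mathcal{L}_m e^{-\mathrm{i}m\omega t}$ be a $T$-periodic Lindbladian ($\omega=2\pi/T$) on operators on $\mathfrak{h}$, as described in the context. For every integer $N\ge0$, the truncated van Vleck effective Liouvillian $\mathcal{L}_\mathrm{eff}=\sum_{k=0}^{N}\mathcal{L}_\mathrm{eff}^{(k)}$ has at least one eigenvalue equal to zero.
   Context: The Lindbladian is $\mathcal{L}_t(\rho)=-\mathrm{i}[H(t),\rho]+\sum_\alpha\big[L_\alpha(t)\rho L_\alpha^\dagger(t)-\tfrac12\{L_\alpha^\dagger(t)L_\alpha(t),\rho\}\big]$, where $H(t)=H(t+T)$ is Hermitian and the (finitely many) jump operators satisfy $L_\alpha(t+T)=L_\alpha(t)$. Writing $H(t)=\sum_m H_m e^{-\mathrm{i}m\omega t}$ and $L_\alpha(t)=\sum_m L_{\alpha,m}e^{-\mathrm{i}m\omega t}$, the Fourier components are $\mathcal{L}_m=\mathcal{H}_m+\mathcal{D}_m$ with $\mathcal{H}_m(\rho)=-\mathrm{i}[H_m,\rho]$ and $\mathcal{D}_m(\rho)=\sum_{\alpha,n}\big[L_{\alpha,m-n}\rho L_{\alpha,n}^\dagger-\tfrac12\{L_{\alpha,n}^\dagger L_{\alpha,m-n},\rho\}\big]$ (all Fourier sums assumed convergent). The van Vleck high-frequency expansion is defined via the ansatz $\mathcal{V}(t,t')=e^{\mathcal{G}_t}e^{\mathcal{L}_\mathrm{eff}(t-t')}e^{-\mathcal{G}_{t'}}$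 for the propagator, with $\mathcal{G}_t$ periodic, $\mathcal{L}_\mathrm{eff}=\sum_{k\ge0}\mathcal{L}_\mathrm{eff}^{(k)}$, $\mathcal{L}_\mathrm{eff}^{(k)}=O(\omega^{-k})$; it is obtained from the isolated-system van Vleck expansion by the substitution $H_m\to\mathrm{i}\mathcal{L}_m$, $H_\mathrm{eff}\to\mathrm{i}\mathcal{L}_\mathrm{eff}$. Explicitly $\mathcal{L}_\mathrm{eff}^{(0)}=\mathcal{L}_0$, $\mathrm{i}\mathcal{L}_\mathrm{eff}^{(1)}=\sum_{m\ne0}\frac{[\mathrm{i}\mathcal{L}_{-m},\mathrm{i}\mathcal{L}_m]}{2m\omega}$, $\mathrm{i}\mathcal{L}_\mathrm{eff}^{(2)}=\sum_{m\ne0}\frac{[[\mathrm{i}\mathcal{L}_{-m},\mathrm{i}\mathcal{L}_0],\mathrm{i}\mathcal{L}_m]}{2m^2\omega^2}+\sum_{m\ne0}\sum_{n\ne0,m}\frac{[[\mathrm{i}\mathcal{L}_{-m},\mathrm{i}\mathcal{L}_{m-n}],\mathrm{i}\mathcal{L}_n]}{3mn\omega^2}$, and in general each $\mathcal{L}_\mathrm{eff}^{(k)}$ with $k\ge1$ is a linear combination (with complex coefficients) of nested commutators of the superoperators $\mathcal{L}_m$. $\mathcal{L}_\mathrm{eff}$ is regarded as a linear map on the space of operators on $\mathfrak{h}$. *)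

(* Defs.v *)
From HB Require Import structures.
From mathcomp Require Import all_boot all_order all_algebra.
From mathcomp Require Import all_classical all_reals all_analysis.
From mathcomp Require Import complex.
Import numFieldNormedType.Exports.
Set Implicit Arguments. Unset Strict Implicit. Unset Printing Implicit Defensive.
Import Order.TTheory GRing.Theory Num.Theory.
Local Open Scope ring_scope.

(* The Hilbert space is C^d with C = R[i]; operators are 'M[R[i]]_d;
   superoperators are represented by their matrices 'M[R[i]]_(d*d)
   (via lin_mx, acting on mxvec-encoded operators). *)

Section Lindblad.
Variable R : realType.
Local Notation C := (R[i]).
Variable d : nat.

Definition adj (A : 'M[C]_d) : 'M[C]_d := map_mx conjc A^T.

Definition Hsup (Hm : 'M[C]_d) (rho : 'M[C]_d) : 'M[C]_d :=
  - (Complex 0 1) *: (Hm *m rho - rho *m Hm).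

Variable J : nat.

Definition Dterm (Ls : 'I_J -> int -> 'M[C]_d) (m n : int) (rho : 'M[C]_d)
  : 'M[C]_d :=
  \sum_(a < J)
    (Ls a (m - n) *m rho *m adj (Ls a n)
     - 2^-1 *: (adj (Ls a n) *m Ls a (m - n) *m rho
                + rho *m (adj (Ls a n) *m Ls a (m - n)))).

(* Symmetric partial sums over n in [-K, K]. *)
Definition Dpart (Ls : 'I_J -> int -> 'M[C]_d) (m : int) (rho : 'M[C]_d)
  (K : nat) : 'M[C]_d :=
  \sum_(k < (K + K).+1) Dterm Ls m (k%:Z - K%:Z) rho.

Definition Dconv (Ls : 'I_J -> int -> 'M[C]_d) : Prop :=
  forall (m : int) (rho : 'M[C]_d) (i j : 'I_d),
    cvgn (fun K : nat => (complex.Re (Dpart Ls m rho K i j) : R)) /\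
    cvgn (fun K : nat => (complex.Im (Dpart Ls m rho K i j) : R)).

Definition Dsup (Ls : 'I_J -> int -> 'M[C]_d) (m : int) (rho : 'M[C]_d)
  : 'M[C]_d :=
  \matrix_(i, j) Complex (limn (fun K : nat => (complex.Re (Dpart Ls m rho K i j) : R)))
                         (limn (fun K : nat => (complex.Im (Dpart Ls m rho K i j) : R))).

Definition Lsup (H : int -> 'M[C]_d) (Ls : 'I_J -> int -> 'M[C]_d) (m : int)
  (rho : 'M[C]_d) : 'M[C]_d := Hsup (H m) rho + Dsup Ls m rho.

Definition Lmx (H : int -> 'M[C]_d) (Ls : 'I_J -> int -> 'M[C]_d) (m : int)
  : 'M[C]_(d * d) := lin_mx (Lsup H Ls m).

End Lindblad.

(* Formal nested commutators of the L_m (leaves labelled by Fourier index). *)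
Inductive ctree : Type := CLeaf of int | CBr of ctree & ctree.

Definition is_br (t : ctree) : bool := if t is CBr _ _ then true else false.

Fixpoint ceval (K : fieldType) (n : nat) (Lm : int -> 'M[K]_n) (t : ctree)
  : 'M[K]_n :=
  match t with
  | CLeaf m => Lm m
  | CBr a b => ceval Lm a *m ceval Lm b - ceval Lm b *m ceval Lm a
  end.

Definition nested_comm_comb (K : fieldType) (n : nat) (Lm : int -> 'M[K]_n)
  (X : 'M[K]_n) : Prop :=
  exists s : seq (K * ctree),
    all (fun p => is_br p.2) s /\ X = \sum_(p <- s) p.1 *: ceval Lm p.2.

(* Main.v *)
Require Import Defs.
From HB Require Import structures.
From mathcomp Require Import all_boot all_order all_algebra.
From mathcomp Require Import all_classical all_reals all_analysis.
From mathcomp Require Import complex.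
Import numFieldNormedType.Exports.
Import Order.TTheory GRing.Theory Num.Theory.
Local Open Scope ring_scope.

Lemma lim_bigsum (R : realType) (I : Type) (r : seq I) (a : I -> nat -> R) :
  (forall i, cvgn (a i)) ->
  cvgn (fun K => \sum_(i <- r) a i K) /\
  limn (fun K => \sum_(i <- r) a i K) = \sum_(i <- r) limn (a i).
Proof.
move=> ca; elim: r => [|x r [IHc IHl]].
  under eq_fun do rewrite big_nil.
  by rewrite big_nil; split; [exact: is_cvg_cst | exact: lim_cst].
under eq_fun do rewrite big_cons.
rewrite big_cons; split.
  exact: (is_cvgD (ca x) IHc).
by rewrite (limD (ca x) IHc) IHl.
Qed.

Lemma Re_sum (R : realType) (I : Type) (r : seq I) (F : I -> R[i]) :
  complex.Re (\sum_(i <- r) F i) = \sum_(i <- r) complex.Re (F i).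
Proof.
elim: r => [|x r IH]; first by rewrite !big_nil; reflexivity.
rewrite !big_cons -IH; case: (F x) => a b; case: (\sum_(j <- r) F j) => c e; reflexivity.
Qed.

Lemma Im_sum (R : realType) (I : Type) (r : seq I) (F : I -> R[i]) :
  complex.Im (\sum_(i <- r) F i) = \sum_(i <- r) complex.Im (F i).
Proof.
elim: r => [|x r IH]; first by rewrite !big_nil; reflexivity.
rewrite !big_cons -IH; case: (F x) => a b; case: (\sum_(j <- r) F j) => c e; reflexivity.
Qed.

Lemma Complex_sum (R : realType) (I : Type) (r : seq I) (a b : I -> R) :
  \sum_(i <- r) Complex (a i) (b i) = Complex (\sum_(i <- r) a i) (\sum_(i <- r) b i).
Proof.
elim: r => [|x r IH]; first by rewrite !big_nil; reflexivity.
rewrite !big_cons IH; reflexivity.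
Qed.

Lemma half_lemma (F : numFieldType) (y : F) : y - 2^-1 * (y *+ 2) = 0.
Proof. by rewrite -[y *+ 2]mulr_natl mulrA mulVf ?mul1r ?subrr // pnatr_eq0. Qed.

Section T.
Variable R : realType.
Local Notation C := (R[i]).
Variable d J : nat.

Lemma tr_Hsup (Hm rho : 'M[C]_d) : \tr (Hsup Hm rho) = 0.
Proof.
by rewrite /Hsup mxtraceZ raddfB /= mxtrace_mulC subrr mulr0.
Qed.

Lemma tr_Dterm (Ls : 'I_J -> int -> 'M[C]_d) m n rho : \tr (Dterm Ls m n rho) = 0.
Proof.
rewrite /Dterm raddf_sum /= big1 // => a _.
rewrite raddfB /= mxtraceZ mxtraceD.
rewrite (mxtrace_mulC rho) (mxtrace_mulC (Ls a _ *m rho)) (mulmxA (adj _)) .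
have h2 : (2 : C) != 0 by rewrite pnatr_eq0.
rewrite -mulr2n; exact: half_lemma.
Qed.

Lemma tr_Dpart (Ls : 'I_J -> int -> 'M[C]_d) m rho K : \tr (Dpart Ls m rho K) = 0.
Proof. by rewrite /Dpart raddf_sum /= big1 // => k _; rewrite tr_Dterm. Qed.

Lemma tr_Dsup (Ls : 'I_J -> int -> 'M[C]_d) m rho : Dconv Ls -> \tr (Dsup Ls m rho) = 0.
Proof.
move=> hc.
rewrite /mxtrace.
under eq_bigr do rewrite mxE.
rewrite Complex_sum.
have [c1 l1] := @lim_bigsum R _ (index_enum 'I_d)
   (fun i K => complex.Re (Dpart Ls m rho K i i)) (fun i => (hc m rho i i).1).
have [c2 l2] := @lim_bigsum R _ (index_enum 'I_d)
   (fun i K => complex.Im (Dpart Ls m rho K i i)) (fun i => (hc m rho i i).2).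
rewrite -l1 -l2.
have e1 : (fun K => \sum_(i <- index_enum 'I_d) complex.Re (Dpart Ls m rho K i i)) = fun=> 0.
  apply: funext => K; rewrite -Re_sum.
  by have := tr_Dpart Ls m rho K; rewrite /mxtrace => ->.
have e2 : (fun K => \sum_(i <- index_enum 'I_d) complex.Im (Dpart Ls m rho K i i)) = fun=> 0.
  apply: funext => K; rewrite -Im_sum.
  by have := tr_Dpart Ls m rho K; rewrite /mxtrace => ->.
by rewrite e1 e2 lim_cst.
Qed.

Lemma tr_Lsup (H : int -> 'M[C]_d) (Ls : 'I_J -> int -> 'M[C]_d) m rho :
  Dconv Ls -> \tr (Lsup H Ls m rho) = 0.
Proof. by move=> hc; rewrite /Lsup mxtraceD tr_Hsup tr_Dsup // addr0. Qed.

Definition tv : 'cV[C]_(d * d) := \col_k \tr (vec_mx (delta_mx 0 k) : 'M[C]_d).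

Lemma tvP (r : 'rV[C]_(d * d)) : r *m tv = (\tr (vec_mx r))%:M.
Proof.
apply/matrixP => i j; rewrite !mxE (ord1 i) (ord1 j) /= mulr1n.
rewrite {2}(row_sum_delta r) !raddf_sum /=; apply: eq_bigr => k _.
by rewrite !mxE linearZ /= mxtraceZ.
Qed.

Lemma lin_tv (f : 'M[C]_d -> 'M[C]_d) :
  (forall A, \tr (f A) = 0) -> lin_mx f *m tv = 0.
Proof.
move=> hf; apply/matrixP => i j.
have := tvP (mxvec (f (vec_mx (delta_mx 0 i)))).
move/matrixP/(_ 0 j); rewrite [in RHS]mxE mxvecK hf mul0rn.
rewrite (_ : (0 : 'M[C]_(d * d, 1)) i j = 0); last by rewrite mxE.
move=> <-.
rewrite [in LHS]mxE [in RHS]mxE; apply: eq_bigr => k _; rewrite mxE //.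
Qed.

Lemma tv_neq0 : (0 < d)%N -> tv != 0.
Proof.
move=> d0; apply/negP => /eqP h0.
have := tvP (mxvec (1%:M : 'M[C]_d)); rewrite h0 mulmx0 mxvecK mxtrace1.
move/matrixP/(_ 0 0); rewrite [in RHS]mxE eqxx mulr1n.
rewrite (_ : (0 : 'M[C]_(1, 1)) 0 0 = 0); last by rewrite mxE.
move/esym/eqP; rewrite pnatr_eq0 => /eqP hd.
by rewrite hd in d0.
Qed.

Lemma ceval_tv (H : int -> 'M[C]_d) (Ls : 'I_J -> int -> 'M[C]_d) t :
  Dconv Ls -> ceval (Lmx H Ls) t *m tv = 0.
Proof.
move=> hc; elim: t => [m|a IHa b IHb] /=.
  by apply: lin_tv => A; apply: tr_Lsup.
by rewrite mulmxBl -!mulmxA IHa IHb !mulmx0 subrr.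
Qed.

End T.

Theorem theorem1 (R : realType) (d J : nat)
  (H : int -> 'M[R[i]]_d) (Ls : 'I_J -> int -> 'M[R[i]]_d)
  (N : nat) (Leff : nat -> 'M[R[i]]_(d * d)) :
  (0 < d)%N ->
  (forall m : int, H (- m) = adj (H m)) ->
  Dconv Ls ->
  Leff 0%N = Lmx H Ls 0 ->
  (forall k : nat, (0 < k <= N)%N -> nested_comm_comb (Lmx H Ls) (Leff k)) ->
  eigenvalue (\sum_(k < N.+1) Leff k) 0.
Proof.
move=> d0 _ hc h0 hk.
set S := \sum_(k < N.+1) Leff k.
have hS : S *m tv R d = 0.
  rewrite /S mulmx_suml big1 // => k _.
  case: (posnP k) => [->|kpos].
    by rewrite h0 /Lmx; apply: lin_tv => A; apply: tr_Lsup.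
  have [s [_ ->]] := hk k (andb_true_intro (conj kpos (ltn_ord k))).
  rewrite mulmx_suml big1 // => p _.
  by rewrite -scalemxAl ceval_tv // scaler0.
have hdet : \det S^T == 0.
  apply/det0P; exists (tv R d)^T.
    by rewrite trmx_eq0 tv_neq0.
  by rewrite -trmx_mul hS trmx0.
rewrite det_tr in hdet.
apply/eigenvalueP; have [v vn0 hv] := det0P hdet.
by exists v => //; rewrite hv scale0r.
Qed.
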